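(* For any $m,n\in\mathbb N$ there exists a constant $c>0$ such that $|\mathbb P^T_m(x)-\mathbb P^T_n(x)|\le c$ for all real $x\ge1$. Consequently $\mathbb P^T_m(x)\sim\mathbb P^T_n(x)$ as $x\to+\infty$ for arbitrary $m,n\in\mathbb N$.
   Context: Let $p_n$ denote the $n$-th prime number. Define $p^{(0)}_n=n$ and recursively $p^{(k+1)}_n=p_{p^{(k)}_n}$ for $k\in\mathbb N_0$. Let $\mathbb P^T_n=\{p^{(k)}_n:k\in\mathbb N\}$ and, for $A\subset\mathbb N$ and $x\ge1$, $A(x)=\#\{a\le x: a\in A\}$. $f\sim g$ means $f/g\to1$. *)

(* Defs.v *)
From Stdlib Require Import Reals.
From Coquelicot Require Import Coquelicot.
From mathcomp Require Import all_boot.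

Set Implicit Arguments.
Unset Strict Implicit.
Unset Printing Implicit Defensive.
Local Open Scope nat_scope.

Lemma exists_prime_above (m : nat) : exists p : nat, prime p && (m < p).
Proof. by have [p pp mp] := prime_above m; exists p; rewrite pp mp. Qed.

Definition nextprime (m : nat) : nat := ex_minn (exists_prime_above m).

Fixpoint primeseq (k : nat) : nat :=
  match k with
  | 0 => 2
  | k'.+1 => nextprime (primeseq k')
  end.

(* p_n = the n-th prime, 1-indexed (p_1 = 2).  p_0 is not used by the paper;
   here it is set to 2 by convention and never occurs below (n >= 1). *)
Definition nth_prime (n : nat) : nat := primeseq n.-1.

Definition iter_prime (k n : nat) : nat := ssrnat.iter k nth_prime n.

(* membership a \in P^T_n = { p^{(k)}_n : k >= 1 }.  The search over k is
   bounded by a, which is harmless since p^{(k)}_n >= k for all k. *)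
Definition in_PT (n a : nat) : bool :=
  [exists k : 'I_a.+1, (0 < val k) && (iter_prime k n == a)].

Definition PT_count_nat (n N : nat) : nat := count (in_PT n) (iota 1 N).

(* P^T_n(x) for real x >= 1: the a <= x are exactly the a <= floor x *)
Definition PT_count (n : nat) (x : R) : nat := PT_count_nat n (Z.to_nat (Int_part x)).

(* Main.v *)
Require Import Defs.
From Stdlib Require Import Reals.
From Coquelicot Require Import Coquelicot.
From mathcomp Require Import all_boot.
From mathcomp Require Import zify.
From Stdlib Require Import Lra Lia.
Section NatPart.
Local Open Scope nat_scope.
Lemma nextprime_gt m : m < nextprime m.
Proof. by rewrite /nextprime; case: ex_minnP => p /andP[_ ?] _. Qed.

Lemma primeseq_ge k : k.+2 <= primeseq k.
Proof. elim: k => //= k IH; exact: leq_ltn_trans IH (nextprime_gt _). Qed.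

Lemma primeseq_mono a b : a <= b -> primeseq a <= primeseq b.
Proof.
apply: (homo_leq (r := leq)) => //; [exact: leq_trans | move=> i /=; exact: ltnW (nextprime_gt _)].
Qed.

Lemma f_gt n : n < nth_prime n.
Proof. rewrite /nth_prime; have := primeseq_ge n.-1; lia. Qed.

Lemma f_mono a b : a <= b -> nth_prime a <= nth_prime b.
Proof. move=> h; apply: primeseq_mono; lia. Qed.

Lemma g_mono k a b : a <= b -> iter_prime k a <= iter_prime k b.
Proof. rewrite /iter_prime; elim: k => //= k IH h; exact: f_mono (IH h). Qed.

Lemma g_strict n : {homo (fun k => iter_prime k n) : i j / i < j}.
Proof. move=> i j; apply: (homo_ltn (r := fun a b => a < b)); [move=> ???; exact: ltn_trans | move=> l; exact: f_gt]. Qed.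

Lemma g_ge k n : k <= iter_prime k n.
Proof. elim: k => // k IH; have := f_gt (iter_prime k n); rewrite /iter_prime /= -/(iter_prime k n); lia. Qed.

Lemma g_inj n : injective (fun k => iter_prime k n).
Proof.
apply: incn_inj => a b; apply/idP/idP => h.
- rewrite leqNgt; apply/negP => /(g_strict n); lia.
- rewrite leq_eqVlt in h; case/orP: h => [/eqP->//|/(g_strict n)]; apply: ltnW.
Qed.

Definition cnt n N := count (fun k => iter_prime k n <= N) (iota 1 N).

Lemma PT_cnt n N : PT_count_nat n N = cnt n N.
Proof.
rewrite /PT_count_nat /cnt -!size_filter.
rewrite -[RHS](size_map (fun k => iter_prime k n)).
apply: perm_size; apply: uniq_perm.
- by apply: filter_uniq; apply: iota_uniq.
- rewrite map_inj_uniq; [by apply: filter_uniq; apply: iota_uniq | exact: g_inj].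
move=> a; rewrite mem_filter mem_iota; apply/idP/idP.
- case/andP => /existsP[k /andP[k0 /eqP ek]] ha.
  apply/mapP; exists (val k) => //; rewrite mem_filter mem_iota ek.
  have := ltn_ord k; rewrite k0 /=; lia.
- case/mapP => k; rewrite mem_filter mem_iota => /andP[hk hk2] ->.
  have := g_ge k n; move=> hg.
  apply/andP; split; last lia.
  apply/existsP; have hk3 : k < (iter_prime k n).+1 by lia.
  exists (Ordinal hk3) => /=; apply/andP; split => //; lia.
Qed.

Lemma cnt_shift m n N : cnt m N <= n + cnt n N.
Proof.
rewrite /cnt; case: (leqP N n) => hN.
  by apply: leq_trans (count_size _ _) _; rewrite size_iota; exact: leq_trans hN (leq_addr _ _).
have hs : forall j, j <= N -> iota 1 N = iota 1 j ++ map (addn j) (iota 1 (N - j)).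
  move=> j hj; rewrite -iotaDl (addnC j 1) -iotaD; congr iota; lia.
rewrite {1}(hs n (ltnW hN)) count_cat; apply: leq_add; first by apply: leq_trans (count_size _ _) _; rewrite size_iota.
rewrite count_map.
apply: (@leq_trans (count (fun k => iter_prime k n <= N) (iota 1 (N - n)))).
  apply: sub_count => k /= h; apply: leq_trans h.
  rewrite addnC /iter_prime iterD -/(iter_prime n m) -/(iter_prime k _).
  apply: g_mono; exact: g_ge.
rewrite (hs (N - n)) ?leq_subr // count_cat leq_addr //.
Qed.

Lemma cnt_large n N K : iter_prime K n <= N -> K <= cnt n N.
Proof.
move=> h; have hK : K <= N by exact: leq_trans (g_ge K n) h.
rewrite /cnt.
have -> : iota 1 N = iota 1 K ++ iota (1 + K) (N - K) by rewrite -iotaD; congr iota; lia.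
rewrite count_cat; apply: leq_trans (leq_addr _ _).
rewrite (@eq_in_count _ _ predT); first by rewrite count_predT size_iota.
move=> k; rewrite mem_iota => /andP[_ hk] /=; apply: leq_trans h.
have : k <= K by lia.
rewrite leq_eqVlt => /orP[/eqP->//|/(g_strict n)]; apply: ltnW.
Qed.
End NatPart.

Local Open Scope R_scope.

Lemma floor_ge (N0 : nat) (x : R) : INR N0 < x -> (N0 <= Z.to_nat (Int_part x))%nat.
Proof.
move=> h; have [h1 h2] := base_Int_part x.
rewrite INR_IZR_INZ in h.
have h3 : IZR (Z.of_nat N0 - 1) < IZR (Int_part x) by rewrite minus_IZR; lra.
have := lt_IZR _ _ h3 => h4.
apply/leP; lia.
Qed.

Lemma arch_nat (r : R) : exists K : nat, r < INR K /\ (1 <= K)%nat.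
Proof.
have [h1 _] := archimed r.
exists (S (Z.to_nat (up r))); split; last by [].
rewrite S_INR INR_IZR_INZ.
have : (up r <= Z.of_nat (Z.to_nat (up r)))%Z by lia.
move/IZR_le; lra.
Qed.

Theorem theorem6 :
  forall m n : nat, leq 1 m -> leq 1 n ->
    (exists c : R, Rlt 0 c /\
       forall x : R, Rle 1 x ->
         Rle (Rabs (Rminus (INR (PT_count m x)) (INR (PT_count n x)))) c)
    /\ is_lim (fun x : R => Rdiv (INR (PT_count m x)) (INR (PT_count n x))) p_infty (Rbar.Finite 1).
Proof.
move=> m n _ _.
have key : forall N, Rabs (INR (cnt m N) - INR (cnt n N)) <= INR m + INR n.
  move=> N; have h1 := cnt_shift m n N; have h2 := cnt_shift n m N.
  move/leP: h1 => /le_INR; move/leP: h2 => /le_INR; rewrite !plus_INR => h2 h1.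
  have := pos_INR m; have := pos_INR n => ??.
  apply: Rabs_le; lra.
split.
  exists (INR m + INR n + 1); split; first by have := pos_INR m; have := pos_INR n; lra.
  move=> x _; rewrite /PT_count !PT_cnt; have := key (Z.to_nat (Int_part x)); lra.
apply/is_lim_spec => eps /=.
set c := INR m + INR n.
have hc : 0 <= c by have := pos_INR m; have := pos_INR n; rewrite /c; lra.
have [K [hK hK1]] := arch_nat (c / eps).
exists (INR (iter_prime K n)) => x hx.
have hN := floor_ge _ _ hx.
rewrite /PT_count !PT_cnt.
set N := Z.to_nat (Int_part x) in hN *.
have hb := cnt_large _ _ _ hN.
have hk := key N.
move/leP: hb => /le_INR hb.
move/leP: hK1 => /le_INR; rewrite /= => hK1.
set A := INR (cnt m N) in hk *; set B := INR (cnt n N) in hb hk *.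
have epos := cond_pos eps.
have hB : 0 < B by lra.
replace (A / B - 1) with ((A - B) / B) by (field; lra).
rewrite Rabs_div; last lra.
rewrite (Rabs_pos_eq B); last lra.
apply/Rlt_div_l; first lra.
have : c < eps * INR K.
  by move: hK; move/(Rlt_div_l _ _ _ epos) => h; lra.
move=> hcK; apply: Rle_lt_trans hk _; apply: Rlt_le_trans hcK _; exact: Rmult_le_compat_l eps _ _ (Rlt_le _ _ epos) hb.
Qed.
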